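(* There is a constant $N>0$ such that for every discriminant $D\in\mathcal{O}_d$ with $|D|>N$ the following holds. Let $\epsilon_D$ be a fundamental solution of $t^2-u^2D=4$, write $\epsilon_D^{\,n+1}=\frac12(t_n+u_n\sqrt{D})$ with $t_n,u_n\in\mathcal{O}_d$ for $n\ge0$, and let $m(\epsilon_D)=\min\{n\ge0 : |t_n|<\frac49|u_n|^2\}$ (which exists and lies in $\{0,1,2\}$). If $m(\epsilon_D)\neq 0$, then $|u_{m(\epsilon_D)}|\le 30|D|^{3/2}$.
   Context: $d\in\{1,2,3,7,11,19,43,67,163\}$ (so $k_d=\mathbb{Q}(\sqrt{-d})$ has class number one), $\mathcal{O}_d$ is the ring of integers of $k_d$. An element $D\in\mathcal{O}_d$ is a discriminant if $D$ is not a perfect square in $\mathcal{O}_d$ and $D\equiv x^2\pmod{4\mathcal{O}_d}$ for some $x\in\mathcal{O}_d$. The square root $\sqrt{D}$ is chosen with argument in $[0,\pi)$. For a solution $(t,u)\in\mathcal{O}_d^2$ of $t^2-u^2D=4$ set $\epsilon_{t,u}=\frac12(t+u\sqrt{D})$. A solution $(t_0,u_0)$ is fundamental if $|\epsilon_{t_0,u_0}|$ is the smallest value larger than $1$ among all $|\epsilon_{t,u}|$; then $\epsilon_D=\epsilon_{t_0,u_0}$. *)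

(* Defs.v *)
From HB Require Import structures.
From mathcomp Require Import all_boot all_order all_algebra all_field.
Set Implicit Arguments. Unset Strict Implicit. Unset Printing Implicit Defensive.
Import Order.TTheory GRing.Theory Num.Theory.
Local Open Scope ring_scope.

(* The nine d with class number one for Q(sqrt(-d)). *)
Definition class_one_d : seq nat := [:: 1; 2; 3; 7; 11; 19; 43; 67; 163]%N.

(* sqrtC z is the square root of z with argument in [0, pi). *)
(* Integral basis generator of O_d: (1 + sqrt(-d))/2 if -d = 1 mod 4, else sqrt(-d). *)
Definition omega_d (d : nat) : algC :=
  if (d %% 4 == 3)%N then (1 + sqrtC (- d%:R)) / 2 else sqrtC (- d%:R).

Definition in_Od (d : nat) (z : algC) : Prop :=
  exists a b : int, z = a%:~R + b%:~R * omega_d d.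

Definition is_discriminant (d : nat) (D : algC) : Prop :=
  [/\ in_Od d D,
      ~ (exists x, in_Od d x /\ D = x ^+ 2) &
      exists x y, [/\ in_Od d x, in_Od d y & D - x ^+ 2 = 4 * y]].

Definition pell_sol (d : nat) (D t u : algC) : Prop :=
  [/\ in_Od d t, in_Od d u & t ^+ 2 - u ^+ 2 * D = 4].

Definition eps_tu (D t u : algC) : algC := (t + u * sqrtC D) / 2.

Definition fundamental_sol (d : nat) (D t0 u0 : algC) : Prop :=
  [/\ pell_sol d D t0 u0, 1 < `|eps_tu D t0 u0| &
      forall t u, pell_sol d D t u -> 1 < `|eps_tu D t u| ->
        `|eps_tu D t0 u0| <= `|eps_tu D t u| ].

(* Main.v *)
Require Import Defs.
From HB Require Import structures.
From mathcomp Require Import all_boot all_order all_algebra all_field.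
From mathcomp Require Import zify ring lra.
Import Order.TTheory GRing.Theory Num.Theory.
Local Open Scope ring_scope.

Set Implicit Arguments. Unset Strict Implicit.

Section R.
Variable d : nat.
Hypothesis d_gt0 : (0 < d)%N.
Definition rr : algC := sqrtC (- d%:R).

Lemma rr2 : rr ^+ 2 = - d%:R.
Proof. exact: sqrtCK. Qed.

Lemma rr_nreal : rr \isn't Num.real.
Proof.
by rewrite realEsqr rr2 oppr_ge0 lern0 -lt0n.
Qed.

Lemma rr_conj : rr^* = - rr.
Proof.
have h : (rr^* - rr) * (rr^* + rr) = 0.
  have -> : (rr^* - rr) * (rr^* + rr) = rr^* ^+ 2 - rr ^+ 2 by ring.
  by rewrite -rmorphXn rr2 rmorphN /= conjC_nat subrr.
move/eqP: h; rewrite mulf_eq0 => /orP[|].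
  rewrite subr_eq0 => /eqP h; move: rr_nreal; by rewrite CrealE h eqxx.
by rewrite addr_eq0 => /eqP.
Qed.

Definition kd (z : algC) := exists p q, [/\ p \in Crat, q \in Crat & z = p + q * rr].

Lemma kd_add x y : kd x -> kd y -> kd (x + y).
Proof.
move=> [p [q [hp hq ->]]] [p' [q' [hp' hq' ->]]].
exists (p + p'), (q + q'); split; rewrite ?rpredD //; ring.
Qed.

Lemma kd_opp x : kd x -> kd (- x).
Proof.
move=> [p [q [hp hq ->]]]; exists (- p), (- q); split; rewrite ?rpredN //; ring.
Qed.

Lemma kd_mul x y : kd x -> kd y -> kd (x * y).
Proof.
move=> [p [q [hp hq ->]]] [p' [q' [hp' hq' ->]]].
exists (p * p' - d%:R * q * q'), (p * q' + q * p'); split.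
- by rewrite rpredB ?rpredM ?rpred_nat.
- by rewrite rpredD ?rpredM.
- apply/eqP; rewrite -subr_eq0; apply/eqP.
  transitivity (q * q' * (rr ^+ 2 + d%:R)); first ring.
  by rewrite rr2 addNr mulr0.
Qed.

Lemma kd_rat c : c \in Crat -> kd c.
Proof. by move=> hc; exists c, 0; split; rewrite ?rpred0 //; ring. Qed.

Lemma kd_conjE p q : p \in Crat -> q \in Crat -> (p + q * rr)^* = p - q * rr.
Proof.
move=> hp hq; rewrite rmorphD rmorphM /= rr_conj.
rewrite (conj_Creal (Creal_Crat hp)) (conj_Creal (Creal_Crat hq)); ring.
Qed.

Lemma Aint_conj x : x \in Aint -> x^* \in Aint.
Proof. by rewrite (Aint_aut Num.conj_op). Qed.

Lemma Aint_quad x b c : b \in Num.int -> c \in Num.int ->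
  x ^+ 2 - b * x + c = 0 -> x \in Aint.
Proof.
move=> hb hc hx.
pose p : {poly algC} := 'X^2 - b%:P * 'X + c%:P.
have pE : p = ('X - x%:P) * ('X - (b - x)%:P).
  rewrite /p; have -> : c = x * (b - x).
    by apply/eqP; rewrite -subr_eq0; apply/eqP; rewrite -hx; ring.
  rewrite polyCM polyCB; ring.
apply: (@root_monic_Aint p).
- by rewrite pE rootM root_XsubC eqxx.
- by rewrite pE monicMl ?monicXsubC.
- apply/polyOverP => i; rewrite coefD coefB coefXn coefCM coefX coefC.
  by case: i => [|[|[|i]]] /=; rewrite ?mulr0 ?mulr1 ?subr0 ?add0r ?addr0 ?sub0r ?rpredN ?rpred1 ?rpred0.
Qed.

Lemma Aint_sqrt x y : y + y^* \in Num.int -> y * y^* \in Num.int ->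
  x ^+ 2 = y -> x \in Aint.
Proof.
move=> h1 h2 hx.
pose p : {poly algC} := 'X^4 - (y + y^*)%:P * 'X^2 + (y * y^*)%:P.
have pE : p = ('X^2 - y%:P) * ('X^2 - (y^*)%:P).
  rewrite /p polyCM polyCD; ring.
apply: (@root_monic_Aint p).
- by rewrite pE rootM; apply/orP; left; rewrite /root !hornerE hx subrr.
- by rewrite pE monicMl ?monicXnsubC.
- apply/polyOverP => i; rewrite coefD coefB coefXn coefCM coefXn coefC.
  by case: i => [|[|[|[|[|i]]]]] /=; rewrite ?mulr0 ?mulr1 ?subr0 ?add0r ?addr0 ?sub0r ?rpredN ?rpred1 ?rpred0.
Qed.

Lemma kd_Aint_tr x : kd x -> x \in Aint ->
  x + x^* \in Num.int /\ x * x^* \in Num.int.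
Proof.
move=> [p [q [hp hq ->]]] hA.
have hA' := Aint_conj hA.
rewrite kd_conjE //; split; apply: Cint_rat_Aint.
- have -> : p + q * rr + (p - q * rr) = p *+ 2 by ring.
  by rewrite rpredMn.
- by rewrite -(kd_conjE hp hq) rpredD.
- have -> : (p + q * rr) * (p - q * rr) = p ^+ 2 - q ^+ 2 * rr ^+ 2 by ring.
  by rewrite rr2 rpredB ?rpredM ?rpredX ?rpredN ?rpred_nat.
- by rewrite -(kd_conjE hp hq) rpredM.
Qed.

End R.

Set Implicit Arguments. Unset Strict Implicit.

Lemma class_facts d : d \in class_one_d ->
  [/\ (0 < d)%N, d = 1%N \/ prime d & (d %% 4 == 3)%N \/ (d = 1 \/ d = 2)%N].
Proof.
rewrite !inE.
by repeat (case/orP => [/eqP-> | ]; first by split => //; auto); move/eqP->; split => //; auto.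
Qed.

Lemma omega_E d : omega_d d = if (d %% 4 == 3)%N then (1 + rr d) / 2 else rr d.
Proof. by []. Qed.

Lemma par1 (a c m e : int) : a^+2 + (2 * e + 1) * c^+2 = 4 * m -> a - c = 2 * ((a - c) %/ 2)%Z.
Proof. move=> h. have h1 := divz_eq a 2. have h2 := divz_eq c 2.
have := modz_ge0 a (isT : 2 != 0 :> int). have := modz_ge0 c (isT : 2 != 0 :> int).
have := ltz_pmod a (isT : 0 < 2 :> int). have := ltz_pmod c (isT : 0 < 2 :> int).
have h3 := divz_eq (a - c) 2.
set ra := (a %% 2)%Z in h1 *. set rc := (c %% 2)%Z in h2 *.
set qa := (a %/ 2)%Z in h1 *. set qc := (c %/ 2)%Z in h2 *.
move=> ? ? ? ?. clearbody ra rc qa qc.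
have : ra = 0 \/ ra = 1 by lia. have : rc = 0 \/ rc = 1 by lia.
move=> [] E2 [] E1; rewrite E1 in h1; rewrite E2 in h2; subst a c; nia.
Qed.
Lemma par2 (a c m : int) : a^+2 + c^+2 = 4 * m -> a = 2 * (a %/ 2)%Z /\ c = 2 * (c %/ 2)%Z.
Proof. move=> h. have h1 := divz_eq a 2. have h2 := divz_eq c 2.
have := modz_ge0 a (isT : 2 != 0 :> int). have := modz_ge0 c (isT : 2 != 0 :> int).
have := ltz_pmod a (isT : 0 < 2 :> int). have := ltz_pmod c (isT : 0 < 2 :> int).
set ra := (a %% 2)%Z in h1 *. set rc := (c %% 2)%Z in h2 *.
set qa := (a %/ 2)%Z in h1 *. set qc := (c %/ 2)%Z in h2 *.
move=> ? ? ? ?. clearbody ra rc qa qc.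
have : ra = 0 \/ ra = 1 by lia. have : rc = 0 \/ rc = 1 by lia.
move=> [] E2 [] E1; rewrite E1 in h1; rewrite E2 in h2; subst a c; nia.
Qed.
Lemma par3 (a c m : int) : a^+2 + 2 * c^+2 = 4 * m -> a = 2 * (a %/ 2)%Z /\ c = 2 * (c %/ 2)%Z.
Proof. move=> h. have h1 := divz_eq a 2. have h2 := divz_eq c 2.
have := modz_ge0 a (isT : 2 != 0 :> int). have := modz_ge0 c (isT : 2 != 0 :> int).
have := ltz_pmod a (isT : 0 < 2 :> int). have := ltz_pmod c (isT : 0 < 2 :> int).
set ra := (a %% 2)%Z in h1 *. set rc := (c %% 2)%Z in h2 *.
set qa := (a %/ 2)%Z in h1 *. set qc := (c %/ 2)%Z in h2 *.
move=> ? ? ? ?. clearbody ra rc qa qc.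
have : ra = 0 \/ ra = 1 by lia. have : rc = 0 \/ rc = 1 by lia.
move=> [] E2 [] E1; rewrite E1 in h1; rewrite E2 in h2; subst a c; nia.
Qed.


Lemma dvd_sq (p : nat) (y w : int) : prime p -> y ^+ 2 = p%:Z * w ->
  exists c : int, y = p%:Z * c.
Proof.
move=> pp h.
have h1 : (p%:Z %| y ^+ 2)%Z by rewrite h dvdz_mulr.
have h2 : (p%:Z %| y)%Z.
  move: h1; rewrite !dvdzE abszX Euclid_dvdX //; by case/andP.
case/dvdzP: h2 => c ->; exists c; by rewrite mulrC.
Qed.

Section Od.
Variable d : nat.
Hypothesis hd : d \in class_one_d.

Lemma d_gt0 : (0 < d)%N. Proof. by case: (class_facts hd). Qed.

Lemma omega_kd : kd d (omega_d d).
Proof.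
rewrite /kd omega_E; case: ifP => _.
  exists (1 / 2 : algC), (1 / 2 : algC); split; rewrite ?rpredM ?rpredV ?rpred1 ?rpred_nat //; field.
  by [].
by exists (0 : algC), (1 : algC); split; rewrite ?rpred0 ?rpred1 //; ring.
Qed.

Lemma Od_kd z : in_Od d z -> kd d z.
Proof.
move=> [a [b ->]].
apply: kd_add; first exact/kd_rat/rpred_int.
by apply: kd_mul; [exact/kd_rat/rpred_int | exact: omega_kd].
Qed.

Lemma omega_Aint : omega_d d \in Aint.
Proof.
rewrite omega_E; case: ifP => h.
  apply: (@Aint_quad _ 1 ((d %/ 4)%N.+1)%:R); rewrite ?rpred1 ?rpred_nat //.
  have hd4 : d%:R = 4 * (d %/ 4)%N%:R + 3 :> algC.
    by rewrite [in LHS](divn_eq d 4) (eqP h) natrD natrM mulrC.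
  have := rr2 d; rewrite hd4 => e.
  transitivity ((rr d ^+ 2 + (4 * (d %/ 4)%N%:R + 3)) / 4); last by rewrite e addNr mul0r.
  rewrite -addn1 natrD; field.
  by [].
apply: (@Aint_quad _ (0 : algC) d%:R); rewrite ?rpred0 ?rpred_nat //.
by rewrite rr2 mul0r subr0 addNr.
Qed.

Lemma Od_Aint z : in_Od d z -> z \in Aint.
Proof.
move=> [a [b ->]]; by rewrite rpredD ?rpredM ?Aint_int ?omega_Aint.
Qed.

Lemma Aint_kd_Od y : kd d y -> y \in Aint -> in_Od d y.
Proof.
have [d0 dP d4] := class_facts hd.
move=> hk hA; have [h1 h2] := kd_Aint_tr d0 hk hA.
case: hk => p [q [hp hq yE]].
have yc := kd_conjE d0 hp hq.
rewrite yE yc in h1 h2.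
have eA : p + q * rr d + (p - q * rr d) = 2 * p by ring.
have eM : (p + q * rr d) * (p - q * rr d) = p ^+ 2 + d%:R * q ^+ 2.
  transitivity (p ^+ 2 - q ^+ 2 * rr d ^+ 2); first ring.
  rewrite rr2; ring.
rewrite eA in h1; rewrite eM in h2.
have hC : (d%:R * (2 * q)) \in Crat by rewrite !rpredM ?rpred_nat.
have hdC2 : d%:R * (2 * q) ^+ 2 \in Num.int.
  have -> : d%:R * (2 * q) ^+ 2 = 4 * (p ^+ 2 + d%:R * q ^+ 2) - (2 * p) ^+ 2 by ring.
  apply: rpredB; [apply: rpredM; [exact: rpred_nat | exact: h2] | exact: rpredX].
have hY : d%:R * (2 * q) \in Num.int.
  apply: Cint_rat_Aint => //.
  apply: (@Aint_quad _ (0 : algC) (- (d%:R * (d%:R * (2 * q) ^+ 2)))).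
  - by rewrite rpred0.
  - by rewrite rpredN rpredM ?rpred_nat.
  - rewrite mul0r subr0; ring.
case/intrP: h1 => a ha; case/intrP: h2 => m hm; case/intrP: hY => y0 hy0.
have E : y0 ^+ 2 = d%:Z * (4 * m - a ^+ 2).
  apply: (intr_inj (R := algC)).
  rewrite rmorphXn rmorphM rmorphB rmorphM rmorphXn /= -hy0 -hm -ha.
  rewrite !pmulrn.
  ring.
have dnz : d%:R != 0 :> algC by rewrite pnatr_eq0; lia.
have dnzZ : d%:Z != 0 by lia.
have [c Ec] : exists c : int, y0 = d%:Z * c.
  case: dP => [d1|pd]; last exact: dvd_sq E.
  by exists y0; rewrite d1 mul1r.
have qc : 2 * q = c%:~R.
  apply: (mulfI dnz); rewrite hy0 Ec rmorphM /= pmulrn //.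
have E2 : a ^+ 2 + d%:Z * c ^+ 2 = 4 * m.
  apply: (mulfI dnzZ); move: E; rewrite Ec => E.
  transitivity ((d%:Z * c) ^+ 2 + d%:Z * a ^+ 2); first ring.
  rewrite E; ring.
have yE2 : y = a%:~R / 2 + c%:~R / 2 * rr d.
  by rewrite yE -ha -qc; field; done.
rewrite /in_Od omega_E yE2.
case: d4 => [d3|[d1|d2]].
- rewrite d3.
  have [e de] : exists e : int, d%:Z = 2 * e + 1.
    exists (d %/ 2)%N; move/eqP: d3 => d3.
    lia.
  rewrite de in E2.
  have := par1 E2 => hk.
  exists ((a - c) %/ 2)%Z, c.
  apply/eqP; rewrite -subr_eq0; apply/eqP.
  transitivity (((a - c)%:~R - 2 * ((a - c) %/ 2)%Z%:~R) / 2 :> algC).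
    rewrite rmorphB /=; field; done.
  have -> : ((a - c)%:~R : algC) = 2 * ((a - c) %/ 2)%Z%:~R.
    by rewrite [in LHS]hk intrM pmulrn.
  by rewrite subrr mul0r.
- subst d; rewrite /= in E2; rewrite mul1r in E2.
  have [ha2 hc2] := par2 E2.
  exists (a %/ 2)%Z, (c %/ 2)%Z; rewrite [in LHS]ha2 [in LHS]hc2 !intrM !pmulrn /=.
  field; done.
- subst d; have [ha2 hc2] := par3 E2.
  exists (a %/ 2)%Z, (c %/ 2)%Z; rewrite [in LHS]ha2 [in LHS]hc2 !intrM !pmulrn /=.
  field; done.
Qed.
End Od.

Set Implicit Arguments. Unset Strict Implicit.

Section U.
Variable d : nat.
Hypothesis hd : d \in class_one_d.

Lemma kd_mulC x c : kd d x -> c \in Crat -> kd d (x * c).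
Proof. move=> hx hc; exact: kd_mul hx (kd_rat d hc). Qed.

Lemma kd_normC w : kd d w -> w * w^* \in Crat.
Proof.
move=> [p [q [hp hq ->]]]; rewrite (kd_conjE (d_gt0 hd)) //.
have -> : (p + q * rr d) * (p - q * rr d) = p ^+ 2 - q ^+ 2 * rr d ^+ 2 by ring.
by rewrite rr2 rpredB ?rpredM ?rpredX ?rpredN ?rpred_nat.
Qed.

Lemma kd_conj w : kd d w -> kd d w^*.
Proof.
move=> [p [q [hp hq E]]]; exists p, (- q); split; rewrite ?rpredN //.
by rewrite E (kd_conjE (d_gt0 hd)) //; ring.
Qed.

Lemma Od_norm_ge1 z : in_Od d z -> z != 0 -> 1 <= `|z|.
Proof.
move=> hz nz.
have [_ h2] := kd_Aint_tr (d_gt0 hd) (Od_kd hz) (Od_Aint hz).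
rewrite -normCK in h2.
have h1 : 1 <= `|z| ^+ 2.
  have := norm_intr_ge1 h2; rewrite normrX normr_id; apply.
  by rewrite expf_eq0 normr_eq0 negb_and nz orbT.
rewrite real_leNgt ?realE ?ler01 ?normr_ge0 //; apply/negP => lt1.
have := exprn_ilt1 2 (normr_ge0 z); rewrite lt1 => /=.
move=> /(_ isT) h3; by rewrite (lt_geF h3) in h1.
Qed.

Lemma uniq_rep D s a b a' b' : is_discriminant d D -> s ^+ 2 = D ->
  kd d a -> kd d b -> kd d a' -> kd d b' -> a + b * s = a' + b' * s -> b = b'.
Proof.
move=> [hD nsq _] hs ka kb ka' kb' E.
apply/eqP; rewrite -subr_eq0; apply/negP => /negP nz.
set w := b - b' in nz.
have kw : kd d w by apply: kd_add kb (kd_opp kb').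
have Ez : s * w = a' - a.
  transitivity ((a + b * s) - (a + b' * s)); first by rewrite /w; ring.
  rewrite E; ring.
have nN : w * w^* != 0 by rewrite mulf_eq0 negb_or conjC_eq0 nz.
have sE : s = (a' - a) * w^* * (w * w^*)^-1.
  by rewrite -Ez; field; rewrite conjC_eq0 nz.
have ks : kd d s.
  rewrite sE; apply: kd_mulC; last by rewrite rpredV kd_normC.
  apply: kd_mul (kd_conj kw); exact: kd_add ka' (kd_opp ka).
have [t1 t2] := kd_Aint_tr (d_gt0 hd) (Od_kd hD) (Od_Aint hD).
have sA : s \in Aint by exact: Aint_sqrt t1 t2 hs.
apply: nsq; exists s; split; [exact (Aint_kd_Od hd ks sA) | by rewrite hs].
Qed.
End U.

Unset Implicit Arguments. Set Strict Implicit.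

Section Real.
Variable R : realFieldType.
Implicit Types a b dl sg v w : R.

Lemma sg_ge (dl sg : R) : 0 <= sg -> sg ^+ 2 = dl -> 200 < dl -> 1 <= sg.
Proof. move=> h0 h1 h2. nra. Qed.

Lemma real_m1 a b dl sg : 0 <= a -> 0 <= b -> 0 <= sg -> sg ^+ 2 = dl ->
  a ^+ 2 <= b ^+ 2 * dl + 4 -> 200 < dl -> 4 / 9 * b ^+ 2 <= a ->
  a * b <= 30 * dl * sg.
Proof.
move=> ha hb hs hsd F1 hdl H.
have s1 := sg_ge _ _ hs hsd hdl.
have a3 : a <= 3 * dl.
  rewrite leNgt; apply/negP => lt.
  have h1 : b ^+ 2 * dl <= 9 / 4 * a * dl by nra.
  nra.
have b3 : b <= 3 * sg.
  rewrite leNgt; apply/negP => lt.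
  have : 9 * sg ^+ 2 < b ^+ 2 by nra.
  nra.
have : a * b <= 3 * dl * (3 * sg) by apply: ler_pM => //; nra.
nra.
Qed.

Lemma real_m2 a b dl sg : 0 <= a -> 0 <= b -> 0 <= sg -> sg ^+ 2 = dl ->
  a ^+ 2 <= b ^+ 2 * dl + 4 -> b ^+ 2 * dl <= a ^+ 2 + 4 -> 1 <= b -> 200 < dl ->
  4 / 9 * (a * b) ^+ 2 <= a ^+ 2 + 2 ->
  b * (a ^+ 2 + 1) <= 30 * dl * sg.
Proof.
move=> ha hb hs hsd F1 F2 b1 hdl H.
have s1 := sg_ge _ _ hs hsd hdl.
have a2 : 196 <= a ^+ 2 by nra.
have b3 : b <= 3.
  rewrite leNgt; apply/negP => lt.
  have b2 : 9 <= b ^+ 2 by nra.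
  have : 0 <= (b ^+ 2 - 9) * a ^+ 2 by apply: mulr_ge0; nra.
  nra.
have : a ^+ 2 <= 9 * dl + 4 by nra.
nra.
Qed.

Lemma real_m3 a b dl v w : 0 <= a -> 0 <= b ->
  b ^+ 2 * dl <= a ^+ 2 + 4 -> 1 <= b -> 200 < dl ->
  a ^+ 2 - 1 <= v -> w <= a ^+ 3 + 3 * a ->
  4 / 9 * (b * v) ^+ 2 <= w -> False.
Proof.
move=> ha hb F2 b1 hdl hv hw H.
have a2 : 196 <= a ^+ 2 by nra.
have a14 : 14 <= a by nra.
have v0 : 195 <= v by nra.
have h1 : v ^+ 2 <= (b * v) ^+ 2.
  have : 0 <= (b ^+ 2 - 1) * v ^+ 2 by apply: mulr_ge0; nra.
  rewrite exprMn; nra.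
have h2 : (a ^+ 2 - 1) ^+ 2 <= v ^+ 2.
  have : 0 <= (v - (a ^+ 2 - 1)) * (v + (a ^+ 2 - 1)) by apply: mulr_ge0; nra.
  nra.
have h3 : 4 * (a ^+ 2 - 1) ^+ 2 <= 9 * (a ^+ 3 + 3 * a) by nra.
nra.
Qed.
End Real.
Arguments real_m1 {R a b dl sg}.
Arguments real_m2 {R a b dl sg}.
Arguments real_m3 {R a b dl v w}.


Lemma leR (X Y : algR) : (X <= Y) = (algRval X <= algRval Y). Proof. by []. Qed.
Lemma ltR (X Y : algR) : (X < Y) = (algRval X < algRval Y). Proof. by []. Qed.
Ltac valE := rewrite ?(rmorphD, rmorphB, rmorphM, rmorphXn, fmorphV, rmorph_nat, rmorph1) /=.

Theorem lemma4p6 (d : nat) (hd : d \in class_one_d) :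
  exists N : algC, 0 < N /\
  forall (D t0 u0 : algC), is_discriminant d D -> N < `|D| ->
    fundamental_sol d D t0 u0 ->
    forall (t u : nat -> algC),
      (forall n : nat, [/\ in_Od d (t n), in_Od d (u n) &
         eps_tu D t0 u0 ^+ n.+1 = (t n + u n * sqrtC D) / 2]) ->
    forall m : nat,
      `|t m| < 4 / 9 * `|u m| ^+ 2 ->
      (forall k : nat, (k < m)%N -> ~ (`|t k| < 4 / 9 * `|u k| ^+ 2)) ->
      m <> 0%N ->
      `|u m| <= 30 * `|D| * sqrtC `|D|.
Proof.
exists 200; split; first by rewrite ltr0n.
move=> D t0 u0 hD hN [[ht0 hu0 pell] eps1 _] t u htu m hm hmin m0.
have hs : sqrtC D ^+ 2 = D := sqrtCK D.
set s := sqrtC D in hs htu eps1 *.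
have kt0 := Od_kd ht0; have ku0 := Od_kd hu0.
have kT n : kd d (t n) by case: (htu n) => h _ _; exact: Od_kd h.
have kU n : kd d (u n) by case: (htu n) => _ h _; exact: Od_kd h.
have rep n a b : kd d a -> kd d b -> eps_tu D t0 u0 ^+ n.+1 = (a + b * s) / 2 ->
    t n = a /\ u n = b.
  move=> ka kb E; case: (htu n) => _ _ E'.
  have E2 : t n + u n * s = a + b * s.
    have two : (2 : algC)^-1 != 0 by rewrite invr_eq0 pnatr_eq0.
    by apply: (mulIf two); rewrite -E' E.
  have ub := uniq_rep hd hD hs (kT n) (kU n) ka kb E2.
  split; last done. by move: E2; rewrite ub => /addIr.
have pell' : u0 ^+ 2 * D = t0 ^+ 2 - 4 by rewrite -pell; ring.
have epsE : eps_tu D t0 u0 = (t0 + u0 * s) / 2 by [].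
have k2 : kd d 2 by apply: kd_rat; rewrite rpred_nat.
have [e0t e0u] : t 0%N = t0 /\ u 0%N = u0 by apply: rep; rewrite ?expr1.
have eps2 : eps_tu D t0 u0 ^+ 2 = ((t0 ^+ 2 - 2) + t0 * u0 * s) / 2.
  rewrite epsE; apply/eqP; rewrite -subr_eq0; apply/eqP.
  transitivity ((u0 ^+ 2 * s ^+ 2 - (t0 ^+ 2 - 4)) / 4); first (field; done).
  by rewrite hs pell' subrr mul0r.
have [e1t e1u] : t 1%N = t0 ^+ 2 - 2 /\ u 1%N = t0 * u0.
  apply: rep => //.
  - by apply: kd_add (kd_opp k2); apply: kd_mul.
  - exact: kd_mul.
have [e2t e2u] : t 2%N = t0 ^+ 3 - 3 * t0 /\ u 2%N = u0 * (t0 ^+ 2 - 1).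
  apply: rep.
  - apply: kd_add; first by apply: kd_mul kt0 (kd_mul kt0 kt0).
    by apply/kd_opp/kd_mul => //; apply: kd_rat; rewrite rpred_nat.
  - apply: kd_mul ku0 (kd_add (kd_mul kt0 kt0) (kd_opp _)).
    by apply: kd_rat; rewrite rpred1.
  rewrite exprS eps2 epsE; apply/eqP; rewrite -subr_eq0; apply/eqP.
  transitivity (t0 * (u0 ^+ 2 * s ^+ 2 - (t0 ^+ 2 - 4)) / 4); first (field; done).
  by rewrite hs pell' subrr mulr0 mul0r.
have unz : u0 != 0.
  apply/negP => /eqP u00.
  have e2 : eps_tu D t0 u0 ^+ 2 = 1.
    have t4 : t0 ^+ 2 = 4 by move: pell; rewrite u00 (expr2 (0 : algC)) !mul0r subr0.
    rewrite eps2 u00 t4 mulr0 mul0r addr0; field; done.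
  have : `|eps_tu D t0 u0| = 1.
    by rewrite -(sqrCK (normr_ge0 _)) -normrX e2 normr1 sqrtC1.
  by move=> e; rewrite e ltxx in eps1.
have b1 := Od_norm_ge1 hd hu0 unz.
have F1 : `|t0| ^+ 2 <= `|u0| ^+ 2 * `|D| + 4.
  have -> : `|t0| ^+ 2 = `|u0 ^+ 2 * D + 4| by rewrite -normrX pell'; congr `|_|; ring.
  by apply: le_trans (ler_normD _ _) _; rewrite normrM normrX normr_nat.
have F2 : `|u0| ^+ 2 * `|D| <= `|t0| ^+ 2 + 4.
  rewrite -normrX -normrM pell'.
  by apply: le_trans (ler_normB _ _) _; rewrite normrX normr_nat.
pose A := in_algR (normr_real t0).
pose B := in_algR (normr_real u0).
pose Dl := in_algR (normr_real D).
have hSr : sqrtC `|D| \is Num.real by rewrite sqrtC_real.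
pose S := in_algR hSr.
have hA : 0 <= A by rewrite leR /=.
have hB : 0 <= B by rewrite leR /=.
have hS : 0 <= S by rewrite leR /= sqrtC_ge0.
have hSD : S ^+ 2 = Dl.
  have : algRval (S ^+ 2) = algRval Dl by rewrite rmorphXn /= sqrtCK.
  exact: val_inj.
have F1R : A ^+ 2 <= B ^+ 2 * Dl + 4 by rewrite leR; valE.
have F2R : B ^+ 2 * Dl <= A ^+ 2 + 4 by rewrite leR; valE.
have b1R : 1 <= B by rewrite leR; valE.
have hNR : 200 < Dl by rewrite ltR; valE.
have H0 : 4 / 9 * B ^+ 2 <= A.
  rewrite leNgt; apply/negP => H; apply: (hmin 0%N); first by case: m m0 {hm hmin} => //.
  by rewrite e0t e0u; move: H; rewrite ltR; valE.
case: m hm hmin m0 H0 => [|[|[|m]]] hm hmin m0 H0 //.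
-
  rewrite e1u normrM.
  have := real_m1 hA hB hS hSD F1R hNR H0.
  by rewrite leR; valE.
-
  have H1 : 4 / 9 * (A * B) ^+ 2 <= A ^+ 2 + 2.
    have T1 : `|t0 ^+ 2 - 2| <= `|t0| ^+ 2 + 2.
      by apply: le_trans (ler_normB _ _) _; rewrite normrX normr_nat.
    pose T := in_algR (normr_real (t0 ^+ 2 - 2)).
    have TR : T <= A ^+ 2 + 2 by rewrite leR; valE.
    apply: le_trans TR; rewrite leNgt; apply/negP => H; apply: (hmin 1%N) => //.
    by rewrite e1t e1u normrM; move: H; rewrite ltR; valE.
  rewrite e2u normrM.
  have V1 : `|t0 ^+ 2 - 1| <= `|t0| ^+ 2 + 1.
    by apply: le_trans (ler_normB _ _) _; rewrite normrX normr1.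
  pose V := in_algR (normr_real (t0 ^+ 2 - 1)).
  have VR : V <= A ^+ 2 + 1 by rewrite leR; valE.
  have := real_m2 hA hB hS hSD F1R F2R b1R hNR H1.
  have : B * V <= B * (A ^+ 2 + 1) by apply: ler_wpM2l.
  move=> h1 h2; have := le_trans h1 h2.
  by rewrite leR; valE.
-
  exfalso.
  pose V := in_algR (normr_real (t0 ^+ 2 - 1)).
  pose W := in_algR (normr_real (t0 ^+ 3 - 3 * t0)).
  have VR : A ^+ 2 - 1 <= V.
    rewrite leR; valE; have := lerB_dist (t0 ^+ 2) 1; by rewrite normrX normr1.
  have WR : W <= A ^+ 3 + 3 * A.
    rewrite leR; valE; apply: le_trans (ler_normB _ _) _.
    by rewrite normrX normrM normr_nat.
  have H2 : 4 / 9 * (B * V) ^+ 2 <= W.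
    rewrite leNgt; apply/negP => H; apply: (hmin 2%N) => //.
    by rewrite e2t e2u normrM; move: H; rewrite ltR; valE.
  exact: real_m3 hA hB F2R b1R hNR VR WR H2.
Qed.
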